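(* Let $X$ be an exponential vector space over a field $K$. Then $X\smallsetminus X_0$ has a basis if and only if the feasible set $Q(X)$ generates $X\smallsetminus X_0$.
   Context: An exponential vector space (evs) over a field $K$ is a partially ordered set $(X,\leq)$ with a binary operation $+$ on $X$ and a map $K\times X\to X$, $(\alpha,x)\mapsto \alpha x$, such that: (A1) $(X,+)$ is a commutative semigroup with identity $\theta$; (A2) $x\leq y$ implies $x+z\leq y+z$ and $\alpha x\leq \alpha y$ for all $z\in X$, $\alpha\in K$; (A3) $\alpha(x+y)=\alpha x+\alpha y$, $\alpha(\beta x)=(\alpha\beta)x$, $(\alpha+\beta)x\leq \alpha x+\beta x$, $1x=x$; (A4) $\alpha x=\theta$ iff $\alpha=0$ or $x=\theta$; (A5) $x+(-1)x=\theta$ iff $x\in X_0$, where $X_0:=\{z\in X: y\not\leq z \text{ for all } y\in X\smallsetminus\{z\}\}$ (the set of minimal elements, called the primitive space; it is a vector space over $K$); (A6) for each $x\in X$ there is $p\in X_0$ with $p\leq x$. For $x\in X\smallsetminus X_0$ let $L(x):=\{z\in X: z\geq \alpha x+p \text{ for some } \alpha\in K\smallsetminus\{0\},\ p\in X_0\}$. A subset $B\subseteq X\smallsetminus X_0$ generates $X\smallsetminus X_0$ if $X\smallsetminus X_0=\bigcup_{b\in B}L(b)$. Elements $x,y\in X\smallsetminus X_0$ are orderly dependent if $x\in L(y)$ or $y\in L(x)$, and orderly independent otherwise; $B\subseteq X\smallsetminus X_0$ is orderly independent if any two distinct members of $B$ are orderly independent. A basis of $X\smallsetminus X_0$ is an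 orderly independent subset of $X\smallsetminus X_0$ that generates $X\smallsetminus X_0$. For $x\in X$ write $\downarrow x:=\{z\in X: z\leq x\}$. The feasible set is $Q(X):=\{x\in X\smallsetminus X_0: (\downarrow x\smallsetminus X_0)\subseteq L(x)\}$. *)

(* Defs.v *)
From mathcomp Require Import all_boot all_algebra.
Set Implicit Arguments. Unset Strict Implicit. Unset Printing Implicit Defensive.
Local Open Scope ring_scope.

Section EVS.
Variables (K : fieldType) (X : Type).
Variables (le : X -> X -> Prop) (add : X -> X -> X) (smul : K -> X -> X) (th : X).

(* primitive space X_0: minimal elements *)
Definition prim (z : X) : Prop := forall y : X, y <> z -> ~ le y z.

Record is_evs : Prop := {
  evs_refl : forall x, le x x;
  evs_antisym : forall x y, le x y -> le y x -> x = y;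
  evs_trans : forall x y z, le x y -> le y z -> le x z;
  evs_addA : forall x y z, add x (add y z) = add (add x y) z;
  evs_addC : forall x y, add x y = add y x;
  evs_add0 : forall x, add x th = x;
  evs_le_add : forall x y z, le x y -> le (add x z) (add y z);
  evs_le_smul : forall x y (a : K), le x y -> le (smul a x) (smul a y);
  evs_smulD : forall (a : K) x y, smul a (add x y) = add (smul a x) (smul a y);
  evs_smulA : forall (a b : K) x, smul a (smul b x) = smul (a * b) x;
  evs_smulDl : forall (a b : K) x, le (smul (a + b) x) (add (smul a x) (smul b x));
  evs_smul1 : forall x, smul 1 x = x;
  evs_smul_eq0 : forall (a : K) x, smul a x = th <-> (a = 0 \/ x = th);
  evs_inv : forall x, add x (smul (-1) x) = th <-> prim x;
  evs_below : forall x, exists p, prim p /\ le p x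
}.

Definition Lset (x : X) : X -> Prop :=
  fun z => exists (a : K) (p : X), a <> 0 /\ prim p /\ le (add (smul a x) p) z.

Definition generates (B : X -> Prop) : Prop :=
  (forall b, B b -> ~ prim b) /\
  (forall z, ~ prim z <-> exists b, B b /\ Lset b z).

Definition orderly_dependent (x y : X) : Prop := Lset y x \/ Lset x y.

Definition orderly_independent_set (B : X -> Prop) : Prop :=
  forall x y, B x -> B y -> x <> y -> ~ orderly_dependent x y.

Definition is_basis (B : X -> Prop) : Prop :=
  (forall b, B b -> ~ prim b) /\ orderly_independent_set B /\ generates B.

Definition feasible : X -> Prop :=
  fun x => ~ prim x /\ (forall z, le z x -> ~ prim z -> Lset x z).

End EVS.

(* Main.v *)
Require Import Defs.
From mathcomp Require Import all_boot all_algebra.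
From Stdlib Require Import ClassicalEpsilon FunctionalExtensionality PropExtensionality Classical.

Theorem mainTheorem5 (K : fieldType) (X : Type) (le : X -> X -> Prop)
  (add : X -> X -> X) (smul : K -> X -> X) (th : X) :
  is_evs le add smul th ->
  ((exists B : X -> Prop, is_basis le add smul B) <->
   generates le add smul (feasible le add smul)).
Proof.
Import GRing.Theory.
Local Open Scope ring_scope.
move=> [refl anti trans addA addC add0 leadd lesm smD smA smDl sm1 sm0 inv below].
have smth : forall a, smul a th = th by move=> a; apply/sm0; right.
have prim0 : prim le th.
  by apply/inv; rewrite smth add0.
have primD : forall p q, prim le p -> prim le q -> prim le (add p q).
  move=> p q /inv Hp /inv Hq; apply/inv.
  by rewrite smD addA -(addA p q) (addC q) addA Hp -addA Hq add0.
have primZ : forall a p, prim le p -> prim le (smul a p).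
  move=> a p /inv Hp; apply/inv.
  by rewrite smA mulrC -smA -smD Hp smth.
have primZinv : forall a x, a <> 0 -> prim le (smul a x) -> prim le x.
  move=> a x a0 h; have -> : x = smul (a^-1) (smul a x).
    by rewrite smA mulVf ?sm1 //; apply/eqP.
  exact: primZ.
have cancel : forall x p, prim le p -> add (add x p) (smul (-1) p) = x.
  by move=> x p /inv Hp; rewrite -addA Hp add0.
have Ltrans : forall x y z, Lset le add smul x y -> Lset le add smul y z ->
    Lset le add smul x z.
  move=> x y z [a [p [a0 [pp h1]]]] [b [q [b0 [pq h2]]]].
  exists (b * a), (add (smul b p) q); split.
    by apply/eqP; rewrite mulf_neq0 //; apply/eqP.
  split; first by apply: primD => //; apply: primZ.
  apply: trans h2; rewrite addA -smA -smD; apply: leadd; exact: lesm.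
have Lrefl : forall x, Lset le add smul x x.
  move=> x; exists 1, th; split; first by apply/eqP; rewrite oner_neq0.
  by split => //; rewrite sm1 add0.
have Lup : forall x y z, Lset le add smul x y -> le y z -> Lset le add smul x z.
  move=> x y z [a [p [a0 [pp h1]]]] h; exists a, p; split => //; split => //.
  exact: trans h.
have Lnonprim : forall x z, ~ prim le x -> Lset le add smul x z -> ~ prim le z.
  move=> x z nx [a [p [a0 [pp h1]]]] pz; apply: nx.
  have e : add (smul a x) p = z.
    by apply: NNPP => ne; exact: pz _ ne h1.
  apply: (primZinv a) => //.
  rewrite -(cancel (smul a x) p pp) e; apply: primD => //; exact: primZ.
have Lsym : forall x y, feasible le add smul y -> ~ prim le x ->
    Lset le add smul x y -> Lset le add smul y x.
  move=> x y [ny fy] nx [a [p [a0 [pp h1]]]].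
  have nw : ~ prim le (add (smul a x) p).
    move=> pw; apply: nx; apply: (primZinv a) => //.
    rewrite -(cancel (smul a x) p pp); apply: primD => //; exact: primZ.
  have [b [q [b0 [pq h2]]]] := fy _ h1 nw.
  have a0' : a^-1 <> 0 by apply/eqP; rewrite invr_eq0; apply/eqP.
  exists (a^-1 * b), (add (smul a^-1 q) (smul (-1) (smul a^-1 p))).
  split; first by apply/eqP; rewrite mulf_neq0 //; apply/eqP.
  split; first by apply (primD); apply (primZ) => //; apply (primZ).
  have h3 := leadd _ _ (smul (-1) (smul a^-1 p)) (lesm _ _ a^-1 h2).
  have an : a != 0 by apply/eqP.
  have pp' : prim le (smul a^-1 p) by apply: primZ.
  rewrite !smD !smA (mulVf an) sm1 -(smA (-1)) (cancel _ _ pp') in h3.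
  by rewrite -addA in h3.
split.
- move=> [B [Bnp [Bind [_ Bgen]]]]; split; first by move=> b [].
  move=> z; split.
  + move=> nz; have [b [Bb Lbz]] := (Bgen z).1 nz.
    exists b; split => //; split; first exact: Bnp.
    move=> w lwb nw; have [b' [Bb' Lb'w]] := (Bgen w).1 nw.
    have Lb'b := Lup _ _ _ Lb'w lwb.
    case: (classic (b' = b)) => [<- //|ne].
    by exfalso; apply: (Bind b' b Bb' Bb ne); right.
  + by move=> [b [[nb _] Lbz]]; exact: Lnonprim Lbz.
- move=> [Qnp Qgen].
  pose eqv x y := Lset le add smul x y /\ Lset le add smul y x.
  pose rep x := epsilon (inhabits th) (fun y => feasible le add smul y /\ eqv x y).
  have repP : forall x, feasible le add smul x ->
      feasible le add smul (rep x) /\ eqv x (rep x).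
    move=> x fx; apply: (epsilon_spec (inhabits th) (fun y => feasible le add smul y /\ eqv x y)).
    by exists x; split => //; split; apply: Lrefl.
  pose B b := exists x, feasible le add smul x /\ b = rep x.
  have Bnp : forall b, B b -> ~ prim le b.
    by move=> b [x [fx ->]]; case: (repP x fx) => [[]].
  exists B; split => //; split.
  + move=> y1 y2 [x1 [f1 ->]] [x2 [f2 ->]] neq dep; apply: neq.
    have [fr1 [e11 e12]] := repP x1 f1.
    have [fr2 [e21 e22]] := repP x2 f2.
    have er : eqv (rep x1) (rep x2).
      case: dep => h.
      * split; last exact: h.
        apply: Lsym => //; first by case: fr2.
      * split; first exact: h.
        apply: Lsym => //; first by case: fr1.
    case: er => er1 er2.
    have ex : eqv x1 x2.
      split.
        exact: (Ltrans _ _ _ e11 (Ltrans _ _ _ er1 e22)).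
      exact: (Ltrans _ _ _ e21 (Ltrans _ _ _ er2 e12)).
    rewrite /rep; f_equal; apply: functional_extensionality => y.
    apply: propositional_extensionality; case: ex => ex1 ex2.
    split => [[fy [h1 h2]]|[fy [h1 h2]]]; split => //; split.
    * exact: Ltrans h1.
    * exact: Ltrans ex1.
    * exact: Ltrans h1.
    * exact: Ltrans ex2.
  + split => // z; split.
    * move=> nz; have [q [fq Lqz]] := (Qgen z).1 nz.
      exists (rep q); split; first by exists q.
      have [_ [_ h]] := repP q fq.
      exact: Ltrans h Lqz.
    * by move=> [b [Bb Lbz]]; exact: Lnonprim (Bnp _ Bb) Lbz.
Qed.
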